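(* Let $d\ge0$ be an integer, let $\mathcal D_d$ be the class of all $d$-degenerate graphs, and let $H$ be a graph. If $H$ is not $d$-degenerate then $\mathrm{ex}(H,\mathcal D_d,n)=0$ for all $n$. If $H$ is $d$-degenerate, then there exist positive real numbers $c_1,c_2$ such that $\mathrm{ex}(H,\mathcal D_d,n)\le c_2n^{\alpha_d(H)}$ for every positive integer $n$ and $\mathrm{ex}(H,\mathcal D_d,n)\ge c_1n^{\alpha_d(H)}$ for all sufficiently large $n$.
   Context: Graphs are finite and simple. A graph is $d$-degenerate if every subgraph has minimum degree at most $d$. $\alpha_d(H)$ is the maximum size of a set of pairwise non-adjacent vertices of $H$ each of degree at most $d$ in $H$. For a class $\mathcal G$ of graphs, $\mathrm{ex}(H,\mathcal G,n)$ is the maximum number of subgraphs isomorphic to $H$ contained in an $n$-vertex graph of $\mathcal G$. *)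

(* Defs.v *)
From mathcomp Require Import all_boot all_order all_algebra.
From mathcomp Require Import boolp reals.
Set Implicit Arguments. Unset Strict Implicit. Unset Printing Implicit Defensive.

(* A (finite, simple) graph on a finite vertex type T is given by a symmetric,
   irreflexive edge relation e : rel T. *)

(* d-degenerate: every (nonempty) subgraph (S, F) -- S a vertex set, F a
   symmetric set of ordered pairs of G-edges with both ends in S -- has a vertex
   of degree at most d. *)
Definition degenerate (d : nat) (T : finType) (e : rel T) : bool :=
  [forall S : {set T}, forall F : {set T * T},
     ((S != set0)
      && (F \subset [set p | [&& e p.1 p.2, p.1 \in S & p.2 \in S]])
      && [forall x, forall y, ((x, y) \in F) ==> ((y, x) \in F)])
     ==> [exists v in S, #|[set u | (v, u) \in F]| <= d]].

Definition gdeg (T : finType) (e : rel T) (v : T) : nat := #|[set u | e v u]|.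

Definition alpha (d : nat) (V : finType) (eH : rel V) : nat :=
  \max_(A : {set V} | [forall x in A, forall y in A, ~~ eH x y]
                      && [forall x in A, gdeg eH x <= d]) #|A|.

Definition iso_subgraph (V T : finType) (eH : rel V) (e : rel T)
  (S : {set T}) (F : {set T * T}) : Prop :=
  (F \subset [set p | [&& e p.1 p.2, p.1 \in S & p.2 \in S]]) /\
  exists f : V -> T, [/\ injective f, S = f @: [set: V] &
                         forall u v, eH u v = ((f u, f v) \in F)].

Definition count_copies (V T : finType) (eH : rel V) (e : rel T) : nat :=
  #|[set p : {set T} * {set T * T} | `[< iso_subgraph eH e p.1 p.2 >] ]|.

Definition rel_of_set (n : nat) (E : {set 'I_n * 'I_n}) : rel 'I_n :=
  fun x y => (x, y) \in E.

Definition is_graph (T : finType) (e : rel T) : bool :=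
  [forall x, forall y, e x y == e y x] && [forall x, ~~ e x x].

Definition ex_deg (d : nat) (V : finType) (eH : rel V) (n : nat) : nat :=
  \max_(E : {set 'I_n * 'I_n} | is_graph (rel_of_set E)
                                && degenerate d (rel_of_set E))
     count_copies eH (rel_of_set E).

(* Main.v *)
Require Import Defs.
From mathcomp Require Import all_boot all_order all_algebra.
From mathcomp Require Import boolp reals.
From mathcomp Require Import zify.
Set Implicit Arguments. Unset Strict Implicit. Unset Printing Implicit Defensive.

Lemma degen_order d (T : finType) (e : rel T) : symmetric e -> degenerate d e ->
  exists r : T -> nat, injective r /\ forall v, #|[set u | e v u && (r v < r u)]| <= d.
Proof.
move=> Hsym Hd.
suff H: forall k (S : {set T}), #|S| <= k -> exists r : T -> nat,
   {in S &, injective r} /\ forall v, v \in S -> #|[set u in S | e v u && (r v < r u)]| <= d.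
  have [r [Hi Hr]] := H #|T| setT (max_card _).
  exists r; split; first by move=> x y Hxy; apply: Hi; rewrite ?inE.
  move=> v; have := Hr v (in_setT v); congr (_ <= _); apply: eq_card => u.
  by rewrite !inE.
elim=> [|k IH] S HS.
  have S0 : S = set0 by apply/eqP; rewrite -cards_eq0 -leqn0.
  by exists (fun _ => 0); split => [x y|v]; rewrite S0 ?inE.
case: (eqVneq S set0) => [S0|SN].
  by exists (fun _ => 0); split => [x y|v]; rewrite S0 ?inE.
move: Hd => /forallP /(_ S) /forallP /(_ [set p | [&& e p.1 p.2, p.1 \in S & p.2 \in S]]).
rewrite SN subxx /=.
have -> : [forall x, forall y, ((x, y) \in [set p | [&& e p.1 p.2, p.1 \in S & p.2 \in S]])
   ==> ((y, x) \in [set p | [&& e p.1 p.2, p.1 \in S & p.2 \in S]])].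
  apply/forallP => x; apply/forallP => y; apply/implyP; rewrite !inE /= Hsym.
  by case/and3P => -> -> ->.
move=> /existsP [v /andP [vS Hv]].
have [|r [Hi Hr]] := IH (S :\ v).
  by move: HS; rewrite (cardsD1 v S) vS.
exists (fun x => if x == v then 0 else (r x).+1); split.
  move=> x y xS yS /=.
  case: (eqVneq x v) => [->|xv]; case: (eqVneq y v) => [->|yv] //.
  by move=> [] /Hi; apply; rewrite !inE ?xv ?yv.
move=> w wS /=.
case: (eqVneq w v) => [->|wv].
  apply: leq_trans Hv; apply: subset_leq_card; apply/subsetP => u.
  by rewrite !inE /= vS => /and3P [-> -> _].
apply: leq_trans (Hr w _); last by rewrite !inE wv.
apply: subset_leq_card; apply/subsetP => u.
rewrite !inE /=; case: (eqVneq u v) => [->|uv] /=; first by rewrite !andbF.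
by [].

Qed.

Lemma order_degen d (T : finType) (e : rel T) (r : T -> nat) : irreflexive e ->
  injective r -> (forall v, #|[set u | e v u && (r v < r u)]| <= d) -> degenerate d e.
Proof.
move=> Hirr Hi Hr.
apply/forallP => S; apply/forallP => F; apply/implyP => /andP [/andP [SN Fsub] _].
have [x0 x0S] := set0Pn _ SN.
case: (arg_minnP r x0S) => v vS vmin.
apply/existsP; exists v; apply/andP; split; first exact: vS.
apply: leq_trans (Hr v); apply: subset_leq_card; apply/subsetP => u.
rewrite !inE => /(subsetP Fsub); rewrite inE /= => /and3P [evu _ uS].
rewrite evu /= ltn_neqAle vmin ?andbT; last exact: uS.
apply/eqP => /Hi uv; by rewrite uv Hirr in evu.
Qed.

Definition Homs (V T : finType) (eH : rel V) (e : rel T) :=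
  [set f : {ffun V -> T} | injectiveb f && [forall u, forall v, eH u v ==> e (f u) (f v)]].

Lemma copies_le_homs (V T : finType) (eH : rel V) (e : rel T) :
  count_copies eH e <= #|Homs eH e|.
Proof.
rewrite /count_copies.
pose phi := fun f : {ffun V -> T} => (f @: setT,
   [set p | [exists u, exists v, eH u v && (p == (f u, f v))]]).
apply: leq_trans (leq_imset_card phi (Homs eH e)).
apply: subset_leq_card; apply/subsetP => -[S F]; rewrite inE => /asboolP [Fsub [f [fi SE Hf]]].
rewrite /= in SE Hf Fsub; apply/imsetP; exists (finfun f).
  rewrite inE; apply/andP; split.
    by apply/injectiveP => x y; rewrite !ffunE; exact: fi.
  apply/forallP => u; apply/forallP => v; apply/implyP; rewrite Hf !ffunE.
  by move/(subsetP Fsub); rewrite inE => /and3P [].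
rewrite /phi; congr pair.
  by rewrite SE; apply: eq_imset => x; rewrite ffunE.
apply/setP => -[x y]; rewrite inE; apply/idP/existsP.
  move=> xyF; move: (xyF) => /(subsetP Fsub); rewrite inE /= SE => /and3P [_].
  move=> /imsetP [u _ Hx] /imsetP [v _ Hy]; subst x y.
  by exists u; apply/existsP; exists v; rewrite !ffunE Hf xyF eqxx.
move=> [u /existsP [v /andP [huv /eqP ->]]].
by rewrite !ffunE -Hf.
Qed.

Lemma hom_degen d (V T : finType) (eH : rel V) (e : rel T) (f : V -> T) :
  injective f -> (forall u v, eH u v -> e (f u) (f v)) -> degenerate d e -> degenerate d eH.
Proof.
move=> fi Hf He.
apply/forallP => SH; apply/forallP => FH; apply/implyP => /andP [/andP [SN Fsub] Fsym].
move: He => /forallP /(_ (f @: SH)) /forallP /(_ ((fun p => (f p.1, f p.2)) @: FH)) /implyP HH.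
have [HP|] := boolP ((f @: SH != set0) &&
   ((fun p => (f p.1, f p.2)) @: FH \subset [set p | [&& e p.1 p.2, p.1 \in f @: SH & p.2 \in f @: SH]]) &&
   [forall x, forall y, ((x, y) \in (fun p => (f p.1, f p.2)) @: FH) ==> ((y, x) \in (fun p => (f p.1, f p.2)) @: FH)]); last first.
  case/negP; apply/andP; split; first (apply/andP; split).
  - by rewrite imset_eq0.
  - apply/subsetP => _ /imsetP [[x y] xyF ->]; move: (subsetP Fsub _ xyF).
    rewrite !inE /= => /and3P [hxy xS yS]; rewrite Hf //= !imset_f //.
  - apply/forallP => x'; apply/forallP => y'; apply/implyP => /imsetP [[x y] xyF [-> ->]].
    move: Fsym => /forallP /(_ x) /forallP /(_ y) /implyP /(_ xyF) yxF.
    by apply/imsetP; exists (y, x).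
move: (HH HP) => /existsP [_ /andP [/imsetP [v vS ->] Hv]].
apply/existsP; exists v; rewrite vS /=.
apply: leq_trans Hv; rewrite -(card_imset _ fi); apply: subset_leq_card.
apply/subsetP => _ /imsetP [u uin ->]; rewrite inE in uin; rewrite inE.
by apply/imsetP; exists (v, u).
Qed.

Definition isl (X Y : Type) (z : X + Y) : bool := if z is inl _ then true else false.

Lemma count_codes (V X Y : finType) a : 0 < #|X| ->
  #|[set c : {ffun V -> (X + Y)%type} | #|[set h | isl (c h)]| <= a]|
    <= 2 ^ #|V| * (#|Y|.+1 ^ #|V| * #|X| ^ a).
Proof.
move=> X0.
set B := #|Y|.+1 ^ #|V| * #|X| ^ a.
rewrite -sum1_card (partition_big (fun c : {ffun V -> (X + Y)%type} => [set h | isl (c h)]) xpredT) //=.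
apply: (@leq_trans (\sum_(A : {set V}) B)); last first.
  rewrite sum_nat_const; apply: leq_mul => //.
  rewrite -(cardsT V) -(card_powerset [set: V]); apply: subset_leq_card; apply/subsetP => A _.
  by rewrite powersetE subsetT.
apply: leq_sum => A _.

  case: (leqP #|A| a) => hA; last first.
    rewrite big_pred0 // => c; apply/andP => -[]; rewrite inE => H /eqP E.
    by rewrite E leqNgt hA in H.
  rewrite sum1_card.
  pose F := fun h : V => if h \in A then [pred z : (X + Y)%type | isl z]
                         else [pred z : (X + Y)%type | ~~ isl z].
  apply: leq_trans (_ : #|family F| <= _).
    apply: subset_leq_card; apply/subsetP => c; rewrite !inE => /andP [_ /eqP E].
    apply/familyP => h; rewrite /F -E inE.
    by case: (c h).
  rewrite card_family foldrE big_image.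
  apply: leq_trans (_ : \prod_(j in V) (if j \in A then #|X| else #|Y|.+1) <= _).
    apply: leq_prod => j _; rewrite /F; case: (j \in A).
      apply: leq_trans (_ : #|(@inl X Y) @: [set: X]| <= _); last first.
        by rewrite (leq_trans (leq_imset_card _ _)) // cardsT.
      by apply: subset_leq_card; apply/subsetP => -[x|y] //= _; rewrite imset_f.
    apply: leq_trans (_ : #|(@inr X Y) @: [set: Y]| <= _); last first.
      by rewrite (leq_trans (leq_imset_card _ _)) // cardsT.
    by apply: subset_leq_card; apply/subsetP => -[x|y] //= _; rewrite imset_f.
  rewrite (bigID (mem A)) /=.
  rewrite (eq_bigr (fun _ => #|X|)); last by move=> i ->.
  rewrite [X in _ * X](eq_bigr (fun _ => #|Y|.+1)); last by move=> i Hi; rewrite (negbTE Hi).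
  rewrite !prod_nat_const mulnC /B; apply: leq_mul.
    by apply: leq_pexp2l => //; apply: max_card.
  by apply: leq_pexp2l.
Qed.

Definition fwd (T : finType) (e : rel T) (r : T -> nat) (x : T) : {set T} :=
  [set u | e x u && (r x < r u)].

Definition code d (V T : finType) (eH : rel V) (e : rel T) (r : T -> nat)
  (f : {ffun V -> T}) : {ffun V -> (T + (V * 'I_d.+1))%type} :=
  [ffun h => if [pick h' | eH h h' && (r (f h') < r (f h))] is Some h'
             then inr (h', inord (index (f h) (enum (fwd e r (f h')))))
             else inl (f h)].

Lemma HomsP (V T : finType) (eH : rel V) (e : rel T) f :
  f \in Homs eH e -> injective f /\ forall u v, eH u v -> e (f u) (f v).
Proof.
rewrite inE => /andP [/injectiveP fi /forallP H]; split => // u v.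
by move: (H u) => /forallP /(_ v) /implyP.
Qed.

Lemma code_inj d (V T : finType) (eH : rel V) (e : rel T) (r : T -> nat) :
  symmetric e -> (forall v, #|fwd e r v| <= d) ->
  {in Homs eH e &, injective (code d eH e r)}.
Proof.
move=> esym Hr f1 f2 /HomsP [i1 h1] /HomsP [i2 h2] Hc.
suff H: forall k h, r (f1 h) < k -> f1 h = f2 h.
  by apply/ffunP => h; apply: (H _ h (ltnSn _)).
elim=> // k IH h hk.
move: Hc => /ffunP /(_ h); rewrite !ffunE.
case: pickP => [h' /andP [hh' lt1]|_]; case: pickP => [h'' /andP [hh'' lt2]|_] //; last by case.
case=> Eh /(congr1 val) /=; subst h''.
have e1 : f1 h' = f2 h' by apply: IH; apply: leq_trans lt1 _; rewrite -ltnS.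
set L := enum (fwd e r (f1 h')).
have m1 : f1 h \in L by rewrite mem_enum inE lt1 andbT esym h1.
have m2 : f2 h \in L by rewrite mem_enum inE e1 lt2 andbT esym h2.
have sL : size L <= d by rewrite -cardE.
rewrite -e1 -/L.
rewrite !inordK => [Hi||]; last 2 first.
- by rewrite ltnS; apply: leq_trans sL; apply: ltnW; rewrite index_mem.
- by rewrite ltnS; apply: leq_trans sL; apply: ltnW; rewrite index_mem.
by rewrite -(nth_index (f1 h) m1) Hi nth_index.
Qed.

Lemma code_src d (V T : finType) (eH : rel V) (e : rel T) (r : T -> nat) f :
  symmetric eH -> irreflexive eH -> injective r -> (forall v, #|fwd e r v| <= d) ->
  f \in Homs eH e -> #|[set h | isl (code d eH e r f h)]| <= alpha d eH.
Proof.
move=> Hs Hirr ri Hr /HomsP [fi hf].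
set A := [set h | _].
have srcP : forall x, x \in A -> forall y, eH x y -> r (f x) < r (f y).
  move=> x; rewrite inE ffunE; case: pickP => [//|N] _ y hxy.
  have := N y; rewrite /= hxy /= => /negbT; rewrite -leqNgt leq_eqVlt => /orP [/eqP|//].
  by move/ri/fi => Exy; rewrite Exy Hirr in hxy.
rewrite /alpha; apply: (leq_bigmax_cond A).
apply/andP; split.
- apply/forallP => x; apply/implyP => xA; apply/forallP => y; apply/implyP => yA.
  apply/negP => hxy.
  have := srcP _ xA _ hxy; have := srcP _ yA x; rewrite Hs hxy => /(_ isT) a b.
  by have := ltn_trans a b; rewrite ltnn.
- apply/forallP => x; apply/implyP => xA; rewrite /gdeg.
  apply: leq_trans (Hr (f x)); rewrite -(card_imset _ fi); apply: subset_leq_card.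
  apply/subsetP => c /imsetP [u]; rewrite inE => hxu ->.
  by rewrite inE hf //= srcP.
Qed.
Lemma homs_bound d (V T : finType) (eH : rel V) (e : rel T) :
  symmetric eH -> irreflexive eH -> symmetric e -> degenerate d e -> 0 < #|T| ->
  #|Homs eH e| <= 2 ^ #|V| * ((#|V| * d.+1).+1 ^ #|V| * #|T| ^ alpha d eH).
Proof.
move=> Hs Hirr esym He T0.
have [r [ri Hr]] := degen_order esym He.
rewrite -(card_in_imset (code_inj (eH := eH) esym Hr)).
apply: leq_trans (_ : #|[set c : {ffun V -> (T + (V * 'I_d.+1))%type} |
    #|[set h | isl (c h)]| <= alpha d eH]| <= _).
  apply: subset_leq_card; apply/subsetP => c /imsetP [f fH ->].
  by rewrite inE code_src.
apply: leq_trans (@count_codes V T (V * 'I_d.+1)%type (alpha d eH) T0) _.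
by rewrite card_prod card_ord.
Qed.

Definition Eimg (W : finType) n (eW : rel W) (g : W -> 'I_n) : {set 'I_n * 'I_n} :=
  [set p | [exists x, exists y, eW x y && (p == (g x, g y))]].

Lemma imgE (W : finType) n (eW : rel W) (g : W -> 'I_n) x y : injective g ->
  rel_of_set (Eimg eW g) (g x) (g y) = eW x y.
Proof.
move=> gi; rewrite /rel_of_set inE; apply/existsP/idP.
  by move=> [x' /existsP [y' /andP [h /eqP [/gi -> /gi ->]]]].
by move=> h; exists x; apply/existsP; exists y; rewrite h eqxx.
Qed.

Lemma imgP (W : finType) n (eW : rel W) (g : W -> 'I_n) a b :
  rel_of_set (Eimg eW g) a b -> exists x y, [/\ a = g x, b = g y & eW x y].
Proof.
rewrite /rel_of_set inE => /existsP [x /existsP [y /andP [h /eqP [-> ->]]]].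
by exists x, y.
Qed.

Lemma img_graph d (W : finType) n (eW : rel W) (g : W -> 'I_n) : injective g ->
  symmetric eW -> irreflexive eW -> degenerate d eW ->
  is_graph (rel_of_set (Eimg eW g)) && degenerate d (rel_of_set (Eimg eW g)).
Proof.
move=> gi Hs Hirr Hd.
have irrE : irreflexive (rel_of_set (Eimg eW g)).
  move=> a; apply/negP => /imgP [x [y [-> /gi <- h]]]; by rewrite Hirr in h.
apply/andP; split.
  apply/andP; split; last by apply/forallP => a; rewrite irrE.
  apply/forallP => a; apply/forallP => b; apply/eqP.
  apply/idP/idP => /imgP [x [y [-> -> h]]]; by rewrite imgE // Hs.
have [rW [ri Hr]] := degen_order Hs Hd.
pose r' := fun z : 'I_n => if [pick w | g w == z] is Some w then (rW w).*2 else (z : nat).*2.+1.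
apply: (@order_degen d _ _ r') => //.
  move=> z1 z2; rewrite /r'.
  case: pickP => [w1 /eqP <-|N1]; case: pickP => [w2 /eqP <-|N2].
  - by move/double_inj/ri => ->.
  - by move/(congr1 odd); rewrite /= !odd_double.
  - by move/(congr1 odd); rewrite /= !odd_double.
  - by case=> /double_inj /val_inj.
move=> z; rewrite /r'.
case: pickP => [w /eqP <-|N]; last first.
  rewrite (_ : [set u | _] = set0) ?cards0 //; apply/setP => u; rewrite !inE.
  apply/negP => /andP [/imgP [x [y [E _ _]]] _].
  by have := N x; rewrite E eqxx.
apply: leq_trans (Hr w); rewrite -(card_imset _ gi); apply: subset_leq_card.
apply/subsetP => u; rewrite inE => /andP [/[dup] H /imgP [x [y [/gi E -> h]]]].
subst x.
case: pickP => [y' /eqP /gi ->|N]; last by have := N y; rewrite eqxx.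
rewrite ltn_double => lt.
by apply/imsetP; exists y => //; rewrite inE h lt.
Qed.

Definition eW (V : finType) (eH : rel V) (A : {set V}) (m : nat) : rel (V * 'I_m.+1) :=
  fun x y => eH x.1 y.1 && (if x.1 \in A then y.2 == ord0 else
               if y.1 \in A then x.2 == ord0 else (x.2 == ord0) && (y.2 == ord0)).
Arguments eW {V} eH A m x y.

Definition rW (V : finType) (A : {set V}) m (rH : V -> nat) (w : V * 'I_m.+1) : nat :=
  if (w.1 \notin A) && (w.2 == ord0) then #|{: V * 'I_m.+1}| + rH w.1
  else enum_rank w.
Arguments rW {V} A m rH w.

Lemma eW_sym (V : finType) (eH : rel V) (A : {set V}) m :
  symmetric eH -> (forall x y, x \in A -> y \in A -> ~~ eH x y) ->
  symmetric (eW eH A m).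
Proof.
move=> Hs ind x y; rewrite /eW Hs.
case xA: (x.1 \in A); case yA: (y.1 \in A) => //=.
  by rewrite (negbTE (ind _ _ yA xA)).
by rewrite [X in _ && X]andbC.
Qed.

Lemma eW_irr (V : finType) (eH : rel V) (A : {set V}) m :
  irreflexive eH -> irreflexive (eW eH A m).
Proof. by move=> Hirr x; rewrite /eW Hirr. Qed.

Lemma rW_inj (V : finType) (A : {set V}) m (rH : V -> nat) :
  injective rH -> injective (rW A m rH).
Proof.
move=> ri [x i] [y j]; rewrite /rW /=.
case: ifP => cx; case: ifP => cy.
- move/addnI/ri => Exy; subst y.
  by move: cx cy => /andP [_ /eqP ->] /andP [_ /eqP ->].
- move=> E; have := ltn_ord (enum_rank (y, j)); by rewrite -E ltnNge leq_addr.
- move=> E; have := ltn_ord (enum_rank (x, i)); by rewrite E ltnNge leq_addr.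
- by move/val_inj/enum_rank_inj.
Qed.

Lemma rW_fwd d (V : finType) (eH : rel V) (A : {set V}) m (rH : V -> nat) :
  (forall v, #|[set u | eH v u && (rH v < rH u)]| <= d) ->
  (forall x, x \in A -> gdeg eH x <= d) ->
  forall w, #|[set u | eW eH A m w u && (rW A m rH w < rW A m rH u)]| <= d.
Proof.
move=> HrH dA [x i].
have pinj : injective (fun y : V => (y, ord0 : 'I_m.+1)) by move=> a b [].
case: (boolP ((x \notin A) && (i == ord0))) => c.
  apply: leq_trans (HrH x); rewrite -(card_imset _ pinj); apply: subset_leq_card.
  apply/subsetP => -[y j]; rewrite inE /eW /rW /= c.
  move: c => /andP [xA /eqP ->]; rewrite (negbTE xA).
  case: (boolP ((y \notin A) && (j == ord0))) => [/andP [yA /eqP Ej]|cy].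
    subst j; rewrite (negbTE yA) !eqxx /= andbT ltn_add2l => /andP [hxy lt].
    by apply/imsetP; exists y => //; rewrite inE hxy lt.
  move=> /andP [_ lt]; exfalso.
  have H1 := leq_ltn_trans (leq_addr _ _) lt.
  by move: (ltn_ord (enum_rank (y, j))); rewrite ltnNge (ltnW H1).
case xA: (x \in A).
  apply: leq_trans (dA x xA); rewrite /gdeg -(card_imset _ pinj); apply: subset_leq_card.
  apply/subsetP => -[y j]; rewrite inE /eW /= xA => /andP [/andP [hxy /eqP ->] _].
  by apply/imsetP; exists y; rewrite ?inE.
rewrite (_ : [set u | _] = set0) ?cards0 //; apply/setP => -[y j]; rewrite !inE /eW /= xA.
move: c; rewrite xA /= => /negbTE ->.
by case: (y \in A); rewrite /= !andbF.
Qed.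

Definition fphi (V : finType) (A : {set V}) m (phi : {ffun {x : V | x \in A} -> 'I_m.+1})
  (h : V) : V * 'I_m.+1 := (h, odflt ord0 (omap phi (insub h))).

Lemma fphiE (V : finType) (eH : rel V) (A : {set V}) m (phi : {ffun {x : V | x \in A} -> 'I_m.+1}) u v :
  (forall x y, x \in A -> y \in A -> ~~ eH x y) ->
  eW eH A m (fphi phi u) (fphi phi v) = eH u v.
Proof.
move=> ind; rewrite /eW /fphi /=.
case uA: (u \in A).
  case: (boolP (eH u v)) => //= h.
  have vA : v \notin A by apply/negP => vA; move: (ind _ _ uA vA); rewrite h.
  by rewrite insubN.
rewrite [insub u]insubN ?uA //= eqxx.
case vA: (v \in A); rewrite ?andbT // insubN ?vA //= eqxx andbT. by [].
Qed.

Lemma copies_lower (V : finType) (eH : rel V) (A : {set V}) m n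
    (g : V * 'I_m.+1 -> 'I_n) :
  injective g -> (forall x y, x \in A -> y \in A -> ~~ eH x y) ->
  m.+1 ^ #|A| <= count_copies eH (rel_of_set (Eimg (eW eH A m) g)).
Proof.
move=> gi ind.
set E := rel_of_set (Eimg (eW eH A m) g).
pose S := fun phi : {ffun {x : V | x \in A} -> 'I_m.+1} => (fun h => g (fphi phi h)) @: [set: V].
pose cp := fun phi => (S phi, [set p | [&& E p.1 p.2, p.1 \in S phi & p.2 \in S phi]]).
have cpi : injective cp.
  move=> p1 p2 [ES _]; apply/ffunP => a.
  have : g (fphi p1 (val a)) \in S p1 by apply: imset_f.
  rewrite ES => /imsetP [h _ /gi [E1 E2]]; subst h.
  by rewrite valK /= in E2.
apply: leq_trans (_ : #|cp @: [set: {ffun {x : V | x \in A} -> 'I_m.+1}]| <= _).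
  rewrite card_imset // cardsT card_ffun card_ord card_sig.
  by apply: eq_leq; congr (_ ^ _); apply: eq_card.
apply: subset_leq_card; apply/subsetP => _ /imsetP [phi _ ->].
rewrite inE; apply/asboolP; split.
  by apply/subsetP => p; rewrite !inE.
exists (fun h => g (fphi phi h)); split => //.
  by move=> a b /gi [].
move=> u v; rewrite inE /= /E imgE // fphiE // !imset_f ?inE //.
by rewrite !andbT.
Qed.
Import Order.TTheory GRing.Theory Num.Theory.

Lemma is_graphP (T : finType) (e : rel T) : is_graph e -> symmetric e /\ irreflexive e.
Proof.
case/andP => /forallP Hs /forallP Hi; split.
  by move=> x y; move: (Hs x) => /forallP /(_ y) /eqP.
by move=> x; apply/negbTE.
Qed.

Lemma expmono x y e : x <= y -> x ^ e <= y ^ e.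
Proof. by case: e => [|e] h //; rewrite leq_exp2r. Qed.

Local Open Scope ring_scope.

Theorem mainTheorem6 (d : nat) (V : finType) (eH : rel V)
    (Hsym : symmetric eH) (Hirr : irreflexive eH) (R : realType) :
  (~~ degenerate d eH -> forall n : nat, ex_deg d eH n = 0%N) /\
  (degenerate d eH ->
   exists c1 c2 : R, [/\ 0 < c1, 0 < c2,
     (forall n : nat, (0 < n)%N ->
        (ex_deg d eH n)%:R <= c2 * n%:R ^+ alpha d eH) &
     (exists N : nat, forall n : nat, (N <= n)%N ->
        c1 * n%:R ^+ alpha d eH <= (ex_deg d eH n)%:R)]).
Proof.
split.
  move=> nH n; apply/eqP; rewrite -leqn0; apply/bigmax_leqP => E /andP [_ dE].
  apply: leq_trans (copies_le_homs _ _) _.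
  rewrite leqn0 cards_eq0; apply/eqP/setP => f; rewrite [in RHS]inE.
  apply/negbTE/negP => /HomsP [fi hf].
  by rewrite (hom_degen fi hf dE) in nH.
move=> dH.
set k := #|V|; set a := alpha d eH.
pose c2n := (2 ^ k * (k * d.+1).+1 ^ k)%N.
pose C := ((2 * k.+1) ^ a)%N.
have C0 : (0 < C)%N by rewrite expn_gt0.
exists (C%:R)^-1, c2n%:R; split.
- by rewrite invr_gt0 ltr0n.
- by rewrite ltr0n /c2n muln_gt0 !expn_gt0.
- move=> n n0; rewrite -natrX -natrM ler_nat.
  apply/bigmax_leqP => E /andP [/is_graphP [esym eirr] dE].
  apply: leq_trans (copies_le_homs _ _) _.
  apply: leq_trans (homs_bound Hsym Hirr esym dE _) _; first by rewrite card_ord.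
  by rewrite card_ord mulnA.
exists (2 * k.+1)%N => n hn.
pose P := fun B : {set V} => [forall x in B, forall y in B, ~~ eH x y]
                          && [forall x in B, (gdeg eH x <= d)%N].
have aE : a = (\max_(B | P B) #|B|)%N by [].
have P0 : P set0 by rewrite /P; apply/andP; split; apply/forallP => x; rewrite inE.
set A := [arg max_(B > set0 | P B) #|B|].
have PA : P A by rewrite /A; case: arg_maxnP.
have aA : a = #|A| by rewrite aE (bigop.bigmax_eq_arg set0).
move: PA => /andP [/forallP ind' /forallP dA'].
have ind : forall x y, x \in A -> y \in A -> ~~ eH x y.
  by move=> x y xA yA; move: (ind' x); rewrite xA => /forallP /(_ y); rewrite yA.
have dA : forall x, x \in A -> (gdeg eH x <= d)%N.
  by move=> x xA; move: (dA' x); rewrite xA.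
set q := (n %/ k.+1)%N.
have q0 : (0 < q)%N by rewrite divn_gt0 //; apply: leq_trans hn; rewrite leq_pmull.
set m := q.-1.
have mq : m.+1 = q by rewrite /m prednK.
have Hle : (#|{: V * 'I_m.+1}| <= n)%N.
  rewrite card_prod card_ord mq /q; apply: leq_trans (leq_divM n k.+1).
  by rewrite mulnC leq_pmul2l.
pose g := fun w : V * 'I_m.+1 => widen_ord Hle (enum_rank w).
have gi : injective g by move=> x y /(congr1 val) /= /val_inj /enum_rank_inj.
have [rH [ri Hr]] := degen_order Hsym dH.
have dW : degenerate d (eW eH A m) := order_degen (@eW_irr V eH A m Hirr) (@rW_inj V A m rH ri) (@rW_fwd d V eH A m rH Hr dA).
have HG := img_graph gi (@eW_sym V eH A m Hsym ind) (@eW_irr V eH A m Hirr) dW.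
have L1 : (q ^ a <= ex_deg d eH n)%N.
  rewrite aA -mq; apply: leq_trans (copies_lower gi ind) _.
  exact: (leq_bigmax_cond (Eimg (eW eH A m) g) HG).
have L2 : (n <= 2 * k.+1 * q)%N.
  have := divn_eq n k.+1; have := ltn_pmod n (ltn0Sn k); rewrite -/q.
  set r := (n %% k.+1)%N => hr hn'; nia.
have L3 : (n ^ a <= C * ex_deg d eH n)%N.
  apply: leq_trans (leq_mul (leqnn C) L1); rewrite /C -expnMn; exact: expmono.
rewrite -natrX; apply: le_trans (_ : C%:R^-1 * (C * ex_deg d eH n)%:R <= _).
  by rewrite ler_wpM2l ?ler_nat // invr_ge0 ler0n.
by rewrite natrM mulrA mulVf ?mul1r // pnatr_eq0 -lt0n.
Qed.
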